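(* Let $\psi$ be a CNF formula with only positive literals, with clauses $C_1,\dots,C_m$ each consisting of three distinct variables, and variables $x_1,\dots,x_p$, in which every variable appears in at least $3$ clauses. Let $G$ be the graph constructed as follows: (1) for each variable $x_i$ create a cycle $D_i$ whose number of vertices equals the number of clauses containing $x_i$; (2) add a vertex $a$ adjacent to every vertex of all cycles $D_1,\dots,D_p$; (3) for each clause $\{x_i,x_j,x_k\}$ add a vertex $u_{ijk}$ adjacent to one vertex of each of $D_i,D_j,D_k$, choosing in each cycle a vertex not yet adjacent to any clause-vertex; (4) subdivide once every edge of the cycles $D_1,\dots,D_p$ and every edge incident to $a$. If $\psi$ has an assignment in which every clause contains exactly one true variable, then $G$ has a $1/2$-shallow topological minor of density $\frac{5m}{2m+1}$.
   Context: A graph $H$ is a $1/2$-shallow topological minor of $G$ if some graph obtained from $H$ by subdividing each edge at most once is isomorphic to a subgraph of $G$. The density of $H$ is $\|H\|/|H|$ (number of edges divided by number of vertices). *)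

(* Defs.v *)
From HB Require Import structures.
From mathcomp Require Import all_boot all_order all_algebra.
Set Implicit Arguments. Unset Strict Implicit. Unset Printing Implicit Defensive.
Import GRing.Theory Num.Theory.

(* The vertex set is the whole type V (isolated vertices allowed). *)

Definition simple_graph (V : finType) (E : {set {set V}}) : Prop :=
  forall e, e \in E -> #|e| = 2.

Definition density (V : finType) (E : {set {set V}}) : rat :=
  (#|E|%:R / #|V|%:R)%R.

(* The graph obtained from (V,E) by subdividing once each edge of S
   (S a subset of E).  Its vertex type is V + S (one new vertex per
   subdivided edge); its edges are the non-subdivided edges of E and,
   for each subdivided edge e = {u,v}, the two edges {u,e} and {v,e}. *)
Definition subdiv_edges (V : finType) (E S : {set {set V}}) :
    {set {set (V + {e : {set V} | e \in S})}} :=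
  [set g : {set (V + {e : {set V} | e \in S})} |
     [exists e in E :\: S, g == [set inl x | x in e]]
  || [exists s : {e : {set V} | e \in S},
        [exists u in val s, g == [set inl u; inr s]]]].

(* H = (V,E) is a 1/2-shallow topological minor of G = (T,EG): some graph
   obtained from H by subdividing each edge at most once is isomorphic to a
   subgraph of G, i.e. admits an injective map into T sending edges to
   edges. *)
Definition half_shallow_top_minor (V : finType) (E : {set {set V}})
    (T : finType) (EG : {set {set T}}) : Prop :=
  exists S : {set {set V}}, S \subset E /\
  exists f : V + {e : {set V} | e \in S} -> T,
    injective f /\
    forall g, g \in subdiv_edges E S -> [set f x | x in g] \in EG.

Section Construction.
Variables (p m : nat) (C : 'I_m -> {set 'I_p}).

(* The cycle D_i has
   one vertex per clause containing x_i; we label it by that clause (it is the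
   vertex of D_i made adjacent to the clause vertex u_j). *)
Definition Inc : finType := {x : 'I_p * 'I_m | x.1 \in C x.2}.

(* vertices: a, clause vertices u_j, cycle vertices, subdivision vertices of
   cycle edges (one per incidence v, for the edge v -- nxt v), subdivision
   vertices of the edges a -- v. *)
Definition GV : finType := (unit + 'I_m + Inc + Inc + Inc)%type.

Definition va : GV := inl (inl (inl (inl tt))).
Definition vu (j : 'I_m) : GV := inl (inl (inl (inr j))).
Definition vc (v : Inc) : GV := inl (inl (inr v)).
Definition vsc (v : Inc) : GV := inl (inr v).
Definition vsa (v : Inc) : GV := inr v.

(* nxt gives the cyclic order of each cycle D_i: it stays inside the
   incidences of the same variable, is injective, and each D_i is a single
   orbit (a cycle through all incidences of x_i). *)
Definition cycle_structure (nxt : Inc -> Inc) : Prop :=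
  [/\ injective nxt,
      forall v : Inc, (val (nxt v)).1 = (val v).1 &
      forall v w : Inc, (val v).1 = (val w).1 -> fconnect nxt v w].

Definition G_edges (nxt : Inc -> Inc) : {set {set GV}} :=
     [set [set va; vsa v] | v : Inc]
  :|: [set [set vsa v; vc v] | v : Inc]
  :|: [set [set vc v; vsc v] | v : Inc]
  :|: [set [set vsc v; vc (nxt v)] | v : Inc]
  :|: [set [set vu (val v).2; vc v] | v : Inc].

End Construction.

(* Main.v *)
Require Import Defs.
From HB Require Import structures.
From mathcomp Require Import all_boot all_order all_algebra.
From mathcomp Require Import zify.
Set Implicit Arguments. Unset Strict Implicit. Unset Printing Implicit Defensive.

Section Proof.
Variables (p m : nat) (C : 'I_m -> {set 'I_p}).
Hypothesis hC3 : forall j : 'I_m, #|C j| = 3.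
Hypothesis hocc : forall i : 'I_p, 3 <= #|[set j | i \in C j]|.
Variable nxt : Inc C -> Inc C.
Hypothesis hinj : injective nxt.
Hypothesis hvar : forall v : Inc C, (val (nxt v)).1 = (val v).1.
Hypothesis hfc : forall v w : Inc C, (val v).1 = (val w).1 -> fconnect nxt v w.
Variable a : 'I_p -> bool.
Hypothesis ha : forall j : 'I_m, #|[set i in C j | a i]| = 1.

Lemma nn (v : Inc C) : nxt (nxt v) <> v.
Proof.
move=> h.
have orb : forall w : Inc C, (val w).1 = (val v).1 -> w \in [set v; nxt v].
  move=> w hw; have /iter_findex <- := hfc (esym hw).
  elim: (findex _ _ _) => [|n IH]; first by rewrite !inE eqxx.
  rewrite iterS; move: IH; rewrite !inE => /orP[]/eqP->.
    by rewrite eqxx ?orbT.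
  by rewrite h eqxx.
have : 3 <= 2; last by [].
apply: leq_trans (hocc (val v).1) _.
apply: (@leq_trans #|[set (val w).2 | w in [set w : Inc C | (val w).1 == (val v).1]]|).
  apply: subset_leq_card; apply/subsetP => j; rewrite inE => hj.
  apply/imsetP; exists (Sub ((val v).1, j) hj : Inc C) => //.
  by rewrite inE /=.
apply: leq_trans (leq_imset_card _ _) _.
apply: (@leq_trans #|[set v; nxt v]|).
  apply: subset_leq_card; apply/subsetP => w; rewrite inE => /eqP; exact: orb.
by rewrite cards2; case: (_ != _).
Qed.

Lemma n1 (v : Inc C) : nxt v <> v.
Proof. by move=> h; apply: (nn (v := v)); rewrite !h. Qed.

Definition FI := {v : Inc C | ~~ a (val v).1}.
Lemma nxtF_proof (v : FI) : ~~ a (val (nxt (val v))).1.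
Proof. by rewrite hvar; exact: (valP v). Qed.
Definition nxtF (v : FI) : FI := Sub (nxt (val v)) (nxtF_proof v).
Definition Fj (j : 'I_m) : {set FI} := [set v : FI | (val (val v)).2 == j].

Lemma card_Fj j : #|Fj j| = 2.
Proof.
have e : [set i in C j | ~~ a i] = [set (val (val v)).1 | v in Fj j].
  apply/setP => i; rewrite inE; apply/andP/imsetP.
    move=> [hi hai].
    exists (Sub (Sub (i, j) hi : Inc C) hai : FI) => //.
    by rewrite inE /=.
  move=> [v]; rewrite inE => /eqP hj ->.
  split; last exact: (valP v).
  have := valP (val v); rewrite /= hj //.
have inj : {in Fj j &, injective (fun v : FI => (val (val v)).1)}.
  move=> v w; rewrite !inE => /eqP hv /eqP hw h1.
  apply: val_inj; apply: val_inj.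
  move: h1 hv hw; case: (val (val v)) => x1 x2; case: (val (val w)) => y1 y2 /=.
  by move=> -> -> ->.
rewrite -(card_in_imset inj) -e.
have := cardsID [set i | a i] (C j).
have -> : C j :&: [set i | a i] = [set i in C j | a i].
  by apply/setP => i; rewrite !inE.
have -> : C j :\: [set i | a i] = [set i in C j | ~~ a i].
  by apply/setP => i; rewrite !inE andbC.
by rewrite ha hC3; case.
Qed.

Lemma card_FI : #|{: FI}| = 2 * m.
Proof.
rewrite -sum1_card (partition_big (fun v : FI => (val (val v)).2) predT) //=.
rewrite (eq_bigr (fun _ => 2)); first by rewrite sum_nat_const card_ord mulnC.
move=> j _; rewrite sum1_card -(card_Fj j) -cardsE.
by congr #|_|; apply/setP => v; rewrite !inE.
Qed.

Definition HV : finType := option FI.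
Definition L : finType := (FI + FI + 'I_m)%type.
Definition lab (l : L) : {set HV} :=
  match l with
  | inl (inl v) => [set None; Some v]
  | inl (inr v) => [set Some v; Some (nxtF v)]
  | inr j => [set Some x | x in Fj j]
  end.

Lemma nxtF_neq (v : FI) : nxtF v != v.
Proof. by apply/eqP => /(congr1 val) /= /n1. Qed.

Lemma Fj_ex j : exists x, x \in Fj j.
Proof.
have : 0 < #|Fj j| by rewrite card_Fj.
by rewrite card_gt0 => /set0Pn.
Qed.

Lemma SomeFj x j : (Some x \in [set Some y | y in Fj j]) = (x \in Fj j).
Proof. by rewrite mem_imset //; move=> ? ? []. Qed.

Lemma FI_eq (x y : FI) : (val (val x)).1 = (val (val y)).1 ->
  (val (val x)).2 = (val (val y)).2 -> x = y.
Proof.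
move=> h1 h2; apply: val_inj; apply: val_inj.
by case: (val (val x)) h1 h2 => x1 x2; case: (val (val y)) => y1 y2 /= -> ->.
Qed.

Lemma lab_inj : injective lab.
Proof.
move=> [[v|v]|j] [[w|w]|k] /=.
- move/setP => /(_ (Some v)); rewrite !inE eqxx ?orbT /= => /esym/eqP[->] //.
- by move/setP => /(_ None); rewrite !inE.
- move/setP => /(_ None); rewrite !inE /= => /esym/imsetP[x _]; done.
- by move/setP => /(_ None); rewrite !inE.
- move=> h.
  have := h; move/setP => /(_ (Some v)); rewrite !inE eqxx /= => /esym/orP[/eqP[->]//|/eqP[ev]].
  move/setP: h => /(_ (Some w)); rewrite !inE eqxx ?orbT /= => /orP[/eqP[->]//|/eqP[ew]].
  exfalso; apply: (nn (v := val v)).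
  have e1 : val v = nxt (val w) by rewrite ev.
  have e2 : val w = nxt (val v) by rewrite ew.
  by rewrite -e2 -e1.
- move=> h; exfalso.
  have := h; move/setP => /(_ (Some v)); rewrite !inE ?eqxx /= ?SomeFj ?inE => /esym/eqP hv.
  move/setP: h => /(_ (Some (nxtF v))); rewrite !inE ?eqxx ?orbT /= ?SomeFj ?inE => /esym/eqP hnv.
  have : nxtF v = v.
    by apply: FI_eq; rewrite /= ?hvar // hv hnv.
  by apply/eqP; exact: nxtF_neq.
- move/setP => /(_ None); rewrite !inE /= => /imsetP[x _]; done.
- move=> h; exfalso.
  have := h; move/setP => /(_ (Some w)); rewrite !inE ?eqxx /= ?SomeFj ?inE => /eqP hv.
  move/setP: h => /(_ (Some (nxtF w))); rewrite !inE ?eqxx ?orbT /= ?SomeFj ?inE => /eqP hnv.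
  have : nxtF w = w.
    by apply: FI_eq; rewrite /= ?hvar // hv hnv.
  by apply/eqP; exact: nxtF_neq.
- move=> h; have [x hx] := Fj_ex j.
  move/setP: h => /(_ (Some x)); rewrite !SomeFj hx.
  by move: hx; rewrite !inE => /eqP -> /esym/eqP ->.
Qed.

Definition E : {set {set HV}} := [set lab l | l : L].

Lemma card_E : #|E| = 5 * m.
Proof.
rewrite card_imset; last exact: lab_inj.
by rewrite cardT -cardE !card_sum card_FI card_ord; lia.
Qed.

Definition subv (l : L) : GV C :=
  match l with
  | inl (inl v) => vsa (val v)
  | inl (inr v) => vsc (val v)
  | inr j => vu C j
  end.

Lemma subv_inj : injective subv.
Proof.
by move=> [[v|v]|j] [[w|w]|k] //= [] //; try (by move=> ->); move/val_inj => ->.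
Qed.

Definition ST : finType := {e : {set HV} | e \in E}.

Definition fmap (x : HV + ST) : GV C :=
  match x with
  | inl None => va C
  | inl (Some v) => vc (val v)
  | inr s => match [pick l | lab l == val s] with
             | Some l => subv l
             | None => va C
             end
  end.

Lemma fmap_inr (s : ST) : exists l, lab l = val s /\ fmap (inr s) = subv l.
Proof.
case: s => e he /=; move: (he) => /imsetP[l _ el].
exists l; split => //.
case: pickP => [l' /eqP h|/(_ l)]; last by rewrite el eqxx.
by rewrite (@lab_inj l' l) // h el.
Qed.

Lemma fmap_inj : injective fmap.
Proof.
move=> [[x|]|s] [[y|]|t] //.
- by case=> /val_inj ->.
- have [l [_ ->]] := fmap_inr t; by case: l => [[?|?]|?].
- have [l [_ ->]] := fmap_inr t; by case: l => [[?|?]|?].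
- have [l [_ ->]] := fmap_inr s; by case: l => [[?|?]|?].
- have [l [_ ->]] := fmap_inr s; by case: l => [[?|?]|?].
- have [l [hl ->]] := fmap_inr s; have [l' [hl' ->]] := fmap_inr t.
  move/subv_inj => e; congr inr; apply: val_inj; by rewrite -hl -hl' e.
Qed.

Lemma inG1 v : [set va C; vsa v] \in G_edges nxt.
Proof. by rewrite /G_edges !in_setU; apply/orP; left; apply/orP; left; apply/orP; left; apply/orP; left; apply/imsetP; exists v. Qed.
Lemma inG2 v : [set vsa v; vc v] \in G_edges nxt.
Proof. by rewrite /G_edges !in_setU; apply/orP; left; apply/orP; left; apply/orP; left; apply/orP; right; apply/imsetP; exists v. Qed.
Lemma inG3 v : [set vc v; vsc v] \in G_edges nxt.
Proof. by rewrite /G_edges !in_setU; apply/orP; left; apply/orP; left; apply/orP; right; apply/imsetP; exists v. Qed.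
Lemma inG4 v : [set vsc v; vc (nxt v)] \in G_edges nxt.
Proof. by rewrite /G_edges !in_setU; apply/orP; left; apply/orP; right; apply/imsetP; exists v. Qed.
Lemma inG5 v : [set vu C (val v).2; vc v] \in G_edges nxt.
Proof. by rewrite /G_edges !in_setU; apply/orP; right; apply/imsetP; exists v. Qed.

Lemma embed : half_shallow_top_minor E (G_edges nxt).
Proof.
exists E; split => //; exists fmap; split; first exact: fmap_inj.
move=> g; rewrite inE => /orP[/existsP[e /andP[]]|]; first by rewrite setDv inE.
move=> /existsP[s /existsP[u /andP[hu /eqP ->]]].
rewrite imsetU1 imset_set1.
have [l [hl ->]] := fmap_inr s.
move: hu; rewrite -hl; case: l {hl} => [[v|v]|j] /= hu.
- rewrite !inE in hu; case/orP: hu => /eqP-> /=; first exact: inG1.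
  by rewrite setUC; exact: inG2.
- rewrite !inE in hu; case/orP: hu => /eqP-> /=; first exact: inG3.
  by rewrite setUC; exact: inG4.
- case/imsetP: hu => w; rewrite inE => /eqP hw -> /=.
  by rewrite setUC -hw; exact: inG5.
Qed.

Lemma simpleE : simple_graph E.
Proof.
move=> e /imsetP[l _ ->]; case: l => [[v|v]|j] /=.
- by rewrite cards2.
- rewrite cards2; suff -> : (Some v != Some (nxtF v)) by [].
  by apply/eqP => -[] /esym /eqP; rewrite (negbTE (nxtF_neq v)).
- by rewrite card_imset ?card_Fj // => ? ? [].
Qed.

Lemma densE : density E = ((5 * m)%:R / (2 * m + 1)%:R)%R.
Proof. by rewrite /density card_E card_option card_FI addn1. Qed.

End Proof.

Theorem lemma2 (p m : nat) (C : 'I_m -> {set 'I_p})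
  (hC3 : forall j : 'I_m, #|C j| = 3)
  (hocc : forall i : 'I_p, 3 <= #|[set j | i \in C j]|)
  (nxt : Inc C -> Inc C) (hnxt : cycle_structure nxt)
  (hsat : exists a : 'I_p -> bool, forall j : 'I_m, #|[set i in C j | a i]| = 1) :
  exists (V : finType) (E : {set {set V}}),
    [/\ simple_graph E,
        half_shallow_top_minor E (G_edges nxt) &
        density E = ((5 * m)%:R / (2 * m + 1)%:R)%R].
Proof.
case: hnxt => hinj hvar hfc; case: hsat => a ha.
exists (HV C a), (E hvar a); split.
- exact: (simpleE hC3 hocc hfc ha).
- exact: (embed hC3 hocc hvar hfc ha).
- exact: (densE hC3 hocc hvar hfc ha).
Qed.
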